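(* If $\psi^A_W$ with $A:W\to\{S,I\}$ is a subsystem state belonging to $M_E$ and $|W|>2$, then there exists $X\supseteq W$ such that $D[X]$ is a directed sub-block.
   Context: $D=(V,A)$ is a directed graph on $V=\{1,\dots,N\}$ with rates $T_{ij}\ge0$, $T_{ij}>0$ iff $(j,i)\in A$, $T_{ii}=0$. A subsystem state is $\psi^A_W$ with $W\subseteq V$ nonempty, $A:W\to\{S,I,R\}$; $S_i,I_i$ are single-node states; for $n\notin W$, $\psi^A_WI_n$ is the state on $W\cup\{n\}$ extending $A$ with $n$ in state $I$; $h^X_k(\psi^A_W)$ changes the state of $k\in W$ to $X$. $\mathrm{IN}(X)$ is the set of nodes from which some member of $X$ is reachable by a directed path; $f_E(X,Y,Z)=1$ iff $\mathrm{IN}(X)\cap\mathrm{IN}(Y)=\emptyset$ in $D-Z$ (else $0$), with the convention $f_E(\{n\},\emptyset,\{k\})=0$. A state $\psi^A_W$, $A:W\to\{S,I\}$, induces: $\psi^A_W$; $h^S_k(\psi^A_W)$ for $k\in W$ with $A_k=I$ and $T_{kn}>0$ for some $n\in W$ with $A_n=I$; and for each $k\in W$, $n\in V\setminus W$ with $T_{kn}>0$: the state $h^S_k(\psi^A_W)I_n$ if $f_E(\{n\},W\setminus\{k\},\{k\})=0$, or the states $h^S_k(\psi^A_W)$, $S_kI_n$, $S_k$ if it equals $1$. $M_E$ is the smallest set of subsystem states containing all $S_i,I_i$ and closed under induced states. $D[X]$ is the subgraph induced on $X$. A graph is biconnected if it has at least three vertices, is connected, and remains connected after deleting any single vertex.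 $D[X]$ is a directed sub-block if some node of $X$ is reachable by a directed path within $D[X]$ from every other node of $X$ and the underlying undirected graph of $D[X]$ is biconnected. *)

(* Defs.v *)
From HB Require Import structures.
From mathcomp Require Import all_boot all_order all_algebra.
Set Implicit Arguments. Unset Strict Implicit. Unset Printing Implicit Defensive.
Import Order.TTheory GRing.Theory Num.Theory.

Inductive st := Sst | Ist | Rst.
Definition st_eqb (a b : st) : bool :=
  match a, b with Sst, Sst | Ist, Ist | Rst, Rst => true | _, _ => false end.
Lemma st_eqP : Equality.axiom st_eqb. Proof. by case; case; constructor. Qed.
HB.instance Definition _ := hasDecEq.Build st st_eqP.

Section Defs.
Variable N : nat.
Local Notation V := 'I_N.

(* A subsystem state psi^A_W: psi i = Some (A i) for i in W, None for i not in W. *)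
Definition state := {ffun V -> option st}.
Definition dom (psi : state) : {set V} := [set i | psi i != None].
Definition noR (psi : state) : bool := [forall i, psi i != Some Rst].

Definition single (i : V) (x : st) : state := [ffun j => if j == i then Some x else None].
(* change (or add) the state of node k to x: h^x_k (k in W) and psi I_n (n notin W) *)
Definition setst (psi : state) (k : V) (x : st) : state :=
  [ffun j => if j == k then Some x else psi j].

(* arc u v  <->  (u,v) is an arc of D, i.e. T_{vu} > 0 *)
Variable arc : rel V.

Definition arcD (Z : {set V}) : rel V := fun u v => [&& u \notin Z, v \notin Z & arc u v].
Definition INset (Z X : {set V}) : {set V} :=
  [set u | (u \notin Z) && [exists v in X, (v \notin Z) && connect (arcD Z) u v]].
(* f_E(X,Y,Z), with the convention f_E({n}, emptyset, {k}) = 0 *)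
Definition fE (X Y Z : {set V}) : bool :=
  if [&& Y == set0, #|X| == 1 & #|Z| == 1] then false
  else [disjoint INset Z X & INset Z Y].

(* states induced by psi (psi assumed to have values in {S,I}) *)
Inductive induced (psi : state) : state -> Prop :=
| ind_self : induced psi psi
| ind_rec k n : k \in dom psi -> psi k = Some Ist -> n \in dom psi -> psi n = Some Ist ->
    arc n k -> induced psi (setst psi k Sst)
| ind_inf0 k n : k \in dom psi -> n \notin dom psi -> arc n k ->
    fE [set n] (dom psi :\ k) [set k] = false ->
    induced psi (setst (setst psi k Sst) n Ist)
| ind_inf1a k n : k \in dom psi -> n \notin dom psi -> arc n k ->
    fE [set n] (dom psi :\ k) [set k] = true -> induced psi (setst psi k Sst)
| ind_inf1b k n : k \in dom psi -> n \notin dom psi -> arc n k ->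
    fE [set n] (dom psi :\ k) [set k] = true -> induced psi (setst (single k Sst) n Ist)
| ind_inf1c k n : k \in dom psi -> n \notin dom psi -> arc n k ->
    fE [set n] (dom psi :\ k) [set k] = true -> induced psi (single k Sst).

Inductive inME : state -> Prop :=
| ME_S i : inME (single i Sst)
| ME_I i : inME (single i Ist)
| ME_step psi psi' : inME psi -> noR psi -> induced psi psi' -> inME psi'.

Definition uarc (X : {set V}) : rel V :=
  fun u v => [&& u \in X, v \in X & arc u v || arc v u].
Definition connected_on (X : {set V}) : Prop :=
  forall u v, u \in X -> v \in X -> connect (uarc X) u v.
Definition biconnected_on (X : {set V}) : Prop :=
  2 < #|X| /\ connected_on X /\ (forall w, w \in X -> connected_on (X :\ w)).
Definition darc (X : {set V}) : rel V := fun u v => [&& u \in X, v \in X & arc u v].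
Definition directed_subblock (X : {set V}) : Prop :=
  (exists2 r, r \in X & forall u, u \in X -> connect (darc X) u r) /\ biconnected_on X.

End Defs.

(* Main.v *)
Require Import Defs.
From HB Require Import structures.
From mathcomp Require Import all_boot all_order all_algebra.
From mathcomp Require Import zify.
Set Implicit Arguments. Unset Strict Implicit. Unset Printing Implicit Defensive.


Section G.
Variable N : nat.
Local Notation V := 'I_N.
Variable arc : rel V.

Lemma route (e : rel V) (p : nat -> V) l :
  (forall i, i < l -> e (p i) (p i.+1)) -> connect e (p 0) (p l).
Proof.
elim: l => [|l IH] H; first exact: connect0.
apply: connect_trans (IH _) (connect1 (H _ _)) => // i Hi; apply: H; lia.
Qed.

Lemma cpathF (e : rel V) x y : connect e x y ->
  exists l (p : nat -> V), [/\ p 0 = x, p l = y, (forall i, i < l -> e (p i) (p i.+1))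
    & (forall i j, i <= l -> j <= l -> p i = p j -> i = j)].
Proof.
case/connectP=> s Hs ->; case/shortenP: Hs => s' Hp Hu _.
exists (size s'), (fun i => nth x (x :: s') i); split => //.
- by rewrite -last_nth.
- move=> i Hi; by move/pathP: Hp => /(_ x i Hi).
- move=> i j Hi Hj /eqP; rewrite nth_uniq //= ?ltnS //; by move/eqP.
Qed.

Lemma uarc_sym (X : {set V}) : symmetric (uarc arc X).
Proof. by move=> u v; rewrite /uarc andbCA orbC. Qed.

Lemma connect_mono (e e' : rel V) : (forall u v, e u v -> e' u v) ->
  forall u v, connect e u v -> connect e' u v.
Proof. move=> H; apply: connect_sub => u v /H; exact: connect1. Qed.

Lemma darc_mono (X Y : {set V}) : X \subset Y -> forall u v, connect (darc arc X) u v -> connect (darc arc Y) u v.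
Proof.
move=> /subsetP s; apply: connect_mono => u v /and3P [a b c].
by rewrite /darc (s _ a) (s _ b) c.
Qed.

Lemma uarc_mono (X Y : {set V}) : X \subset Y -> forall u v, connect (uarc arc X) u v -> connect (uarc arc Y) u v.
Proof.
move=> /subsetP s; apply: connect_mono => u v /and3P [a b c].
by rewrite /uarc (s _ a) (s _ b) c.
Qed.

Definition rooted (X : {set V}) := exists2 r, r \in X & forall u, u \in X -> connect (darc arc X) u r.
Definition good (X : {set V}) := [/\ rooted X, connected_on arc X & forall w, w \in X -> connected_on arc (X :\ w)].

Lemma rooted_conn (X : {set V}) : rooted X -> connected_on arc X.
Proof.
case=> r rX H u v uX vX.
have d2u : forall a b, connect (darc arc X) a b -> connect (uarc arc X) a b.
  apply: connect_mono => a b /and3P [p q s]; by rewrite /uarc p q s.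
apply: connect_trans (d2u _ _ (H u uX)) _.
rewrite (sym_connect_sym (@uarc_sym X)); exact: d2u (H v vX).
Qed.

Lemma good_small (X : {set V}) : rooted X -> #|X| <= 2 -> good X.
Proof.
move=> Hr Hc; split => //; first exact: rooted_conn.
move=> w wX u v uX vX.
have : #|X :\ w| <= 1 by move: Hc; rewrite (cardsD1 w X) wX; lia.
move/card_le1_eqP => /(_ u v uX vX) ->; exact: connect0.
Qed.


Definition img (f : nat -> V) m : {set V} := [set v | [exists i : 'I_m.+1, v == f i]].

Lemma img_in f m i : i <= m -> f i \in img f m.
Proof. move=> H; rewrite inE; apply/existsP; exists (Ordinal (n:=m.+1) H); by []. Qed.

Lemma key (X : {set V}) (f : nat -> V) m (Y : {set V}) (w : V) :
 f 0 \in X -> f m \in X ->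
 (forall i, i < m -> arc (f i) (f i.+1) || arc (f i.+1) (f i)) ->
 (forall i j, i <= m -> j <= m -> f i = f j -> i = j) ->
 Y \subset X :|: img f m -> (forall v, v \in X :|: img f m -> v != w -> v \in Y) ->
 connected_on arc (X :&: Y) -> connected_on arc Y.
Proof.
move=> f0 fm adj inj /subsetP YX' HY HC.
have C : forall t, t \in Y -> exists2 a, a \in X :&: Y & connect (uarc arc Y) t a.
  move=> t tY; have := YX' _ tY; rewrite inE; case/orP => tX.
    by exists t; [rewrite inE tX tY | exact: connect0].
  move: tX; rewrite inE => /existsP [[i Hi] /= /eqP Et]; subst t; rewrite ltnS in Hi.
  have fX' : forall x, x <= m -> f x \in X :|: img f m.
    by move=> x Hx; rewrite inE img_in ?orbT.
  case: (boolP [forall j : 'I_i.+1, f j \in Y]) => [/forallP Hb | /forallPn Hb].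
    have fY : forall x, x <= i -> f x \in Y.
      by move=> x Hx; exact: (Hb (Ordinal (n:=i.+1) Hx)).
    exists (f 0); first by rewrite inE f0 fY.
    have := @route (uarc arc Y) (fun s => f (i - s)) i; rewrite subn0 subnn; apply.
    move=> s Hs; rewrite /uarc !fY ?leq_subr //=.
    have -> : i - s = (i - s.+1).+1 by lia.
    rewrite orbC; apply: adj; lia.
  case: Hb => -[j Hj] /= fjY; rewrite ltnS in Hj.
  have fjw : f j = w by apply/eqP; apply: contraNT fjY => H; apply: HY => //; apply: fX'; lia.
  have fY : forall s, s <= m - i -> f (i + s) \in Y.
    move=> s Hs; case: (boolP (f (i + s) \in Y)) => // H.
    have : f (i + s) = w by apply/eqP; apply: contraNT H => H'; apply: HY => //; apply: fX'; lia.
    rewrite -fjw => /inj E; have ? : i + s = j by apply: E; lia.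
    have ? : s = 0 by lia. subst s. have ? : j = i by lia. subst j. by rewrite addn0 tY in H.
  exists (f m); first by rewrite inE fm /= (_ : m = i + (m - i)) ?fY //; lia.
  have := @route (uarc arc Y) (fun s => f (i + s)) (m - i); rewrite addn0 subnKC //; apply.
  move=> s Hs; rewrite /uarc !fY //; last lia. rewrite addnS; apply: adj; lia.
move=> u v uY vY.
case: (C u uY) => a aXY ua; case: (C v vY) => b bXY vb.
apply: connect_trans ua _; apply: connect_trans (uarc_mono (subsetIr X Y) (HC _ _ aXY bXY)) _.
by rewrite (sym_connect_sym (@uarc_sym Y)).
Qed.


Definition glue (g h : nat -> V) (k : V) lt lq i :=
  if i <= lt then g (lt - i) else if i <= lt + lq then h (i - lt) else k.

Section Glue.
Variables (g h : nat -> V) (k : V) (lt lq : nat).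
Local Notation f := (glue g h k lt lq).
Lemma glue_g i : i <= lt -> f i = g (lt - i).
Proof. by move=> Hi; rewrite /glue Hi. Qed.
Lemma glue_h j : j <= lq -> h 0 = g 0 -> f (lt + j) = h j.
Proof.
move=> Hj E; case: j Hj => [|j] Hj; first by rewrite addn0 /glue leqnn subnn E.
rewrite /glue; have -> : (lt + j.+1 <= lt) = false by lia.
have -> : (lt + j.+1 <= lt + lq) = true by lia.
by congr h; lia.
Qed.
Lemma glue_m : f (lt + lq + 1) = k.
Proof.
rewrite /glue; have -> : (lt + lq + 1 <= lt) = false by lia.
by have -> : (lt + lq + 1 <= lt + lq) = false by lia.
Qed.
Lemma glue_cls i : i <= lt + lq + 1 -> [\/ i <= lt,
   exists2 j, 0 < j <= lq & i = lt + j | i = lt + lq + 1].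
Proof.
move=> Hi; case: (leqP i lt) => H1; first by constructor 1.
case: (leqP i (lt + lq)) => H2; last by constructor 3; lia.
constructor 2; exists (i - lt); lia.
Qed.
Lemma glue_adj : h 0 = g 0 -> (forall i, i < lt -> arc (g i) (g i.+1)) ->
  (forall i, i < lq -> arc (h i) (h i.+1)) -> arc (h lq) k ->
  forall i, i < lt + lq + 1 -> arc (f i) (f i.+1) || arc (f i.+1) (f i).
Proof.
move=> E ga ha hk i Hi.
case: (leqP lt i) => H1.
  have -> : i = lt + (i - lt) by lia.
  case: (leqP lq (i - lt)) => H2.
    have -> : i - lt = lq by lia.
    rewrite glue_h //; have -> : (lt + lq).+1 = lt + lq + 1 by rewrite addn1.
    by rewrite glue_m hk.
  have H3 : i - lt <= lq by lia.
  have H4 : (i - lt).+1 <= lq by lia.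
  rewrite -addnS (glue_h H3 E) (glue_h H4 E).
  by rewrite ha.
rewrite !glue_g //; last lia.
have -> : lt - i = (lt - i.+1).+1 by lia.
rewrite ga ?orbT //; lia.
Qed.
Lemma glue_inj : h 0 = g 0 ->
  (forall i j, i <= lt -> j <= lt -> g i = g j -> i = j) ->
  (forall i j, i <= lq -> j <= lq -> h i = h j -> i = j) ->
  (forall i j, i <= lt -> 0 < j <= lq -> g i <> h j) ->
  (forall i, i <= lt -> g i <> k) -> (forall j, j <= lq -> h j <> k) ->
  forall i j, i <= lt + lq + 1 -> j <= lt + lq + 1 -> f i = f j -> i = j.
Proof.
move=> E gi hi gh gk hk i j Hi Hj.
case: (glue_cls Hi) => [Ci|[i' Hi' ->]|->]; case: (glue_cls Hj) => [Cj|[j' Hj' ->]|->].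
- rewrite (glue_g Ci) (glue_g Cj) => /gi H; have := H (leq_subr _ _) (leq_subr _ _); lia.
- have Hj'' : j' <= lq by lia.
  rewrite (glue_g Ci) (glue_h Hj'' E) => /gh H; exfalso; apply: H => //; lia.
- rewrite (glue_g Ci) glue_m => /gk H; exfalso; apply: H; lia.
- have Hi'' : i' <= lq by lia.
  rewrite (glue_g Cj) (glue_h Hi'' E) => /esym /gh H; exfalso; apply: H => //; lia.
- have Hi'' : i' <= lq by lia. have Hj'' : j' <= lq by lia.
  rewrite (glue_h Hi'' E) (glue_h Hj'' E) => /hi H; have := H Hi'' Hj''; lia.
- have Hi'' : i' <= lq by lia.
  rewrite (glue_h Hi'' E) glue_m => /hk H; exfalso; apply: H; lia.
- rewrite (glue_g Cj) glue_m => /esym /gk H; exfalso; apply: H; lia.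
- have Hj'' : j' <= lq by lia.
  rewrite (glue_h Hj'' E) glue_m => /esym /hk H; exfalso; apply: H; lia.
- by [].
Qed.
End Glue.

Lemma cross (e : rel V) (P : pred V) s a : path e a s -> P a -> ~~ P (last a s) ->
  exists z y, [/\ P z, ~~ P y, e z y & connect e y (last a s)].
Proof.
elim: s a => [|b s IH] a /=; first by move=> _ ->.
case/andP=> eab Hp Pa nP; case: (boolP (P b)) => Pb.
  exact: IH.
exists a, b; split => //; apply/connectP; by exists s.
Qed.

End G.


Section G2.
Variable N : nat.
Local Notation V := 'I_N.
Variable arc : rel V.
Local Notation rooted := (rooted arc).
Local Notation good := (good arc).
Local Notation glue := (@glue N).
Section Ear.
Variables (X : {set V}) (k n w' u : V).
Hypotheses (gX : good X) (kX : k \in X) (nX : n \notin X) (ank : arc n k)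
  (w'X : w' \in X) (w'k : w' != k)
  (un : connect (arcD arc [set k]) u n) (uw : connect (arcD arc [set k]) u w').

Let e1 : rel V := fun a b => [&& a \notin X, b != k & arc a b].
Let Rch (v : V) : bool := [exists x in X :\ k, connect e1 v x].

Lemma RchX v : v \in X -> v != k -> Rch v.
Proof. move=> vX vk; apply/existsP; exists v; rewrite !inE vk vX connect0. by []. Qed.

Lemma Rch_back v v' : arcD arc [set k] v v' -> Rch v' -> Rch v.
Proof.
case/and3P; rewrite !inE => vk v'k avv' /existsP [x /andP [xX cx]].
case: (boolP (v \in X)) => vX; first exact: RchX.
apply/existsP; exists x; rewrite xX /=; apply: connect_trans cx.
by apply: connect1; rewrite /e1 vX v'k.
Qed.

Lemma Rch_nk v : Rch v -> v != k.
Proof.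
case/existsP=> x /andP [xX /connectP [s]]; case: s => [|b s] /=.
  by move=> _ E; move: xX; rewrite -E !inE; case: eqP.
by case: eqP => // -> /andP [/and3P [kX' _ _]]; rewrite kX in kX'.
Qed.

Lemma Rch_u : Rch u.
Proof.
case/connectP: uw => s Hs E.
have : last u s \in X :\ k by rewrite -E !inE w'k w'X.
elim: s u Hs {E} => [|b s IH] a /=.
  rewrite !inE => _ /andP [ak aX]; exact: RchX.
case/andP=> H1 H2 H3; apply: Rch_back H1 _; exact: IH.
Qed.


Lemma get_h : exists z lq (h : nat -> V), [/\ (h 0 = z /\ h lq = n), Rch z,
  (forall i, i < lq -> arcD arc [set k] (h i) (h i.+1)),
  (forall j, 0 < j <= lq -> ~~ Rch (h j))
  & (forall i j, i <= lq -> j <= lq -> h i = h j -> i = j)].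
Proof.
case: (boolP (Rch n)) => Rn.
  exists n, 0, (fun _ => n); split => //.
  - by move=> [|j]; rewrite ?andbF.
  - by move=> [|i] [|j].
case/connectP: un => s Hs E.
have := cross Hs Rch_u; rewrite -E => /(_ Rn) [z [y [Rz Ry zy yn]]].
case: (cpathF yn) => l0 [p0 [p00 p0l p0e p0i]].
have p0R : forall i, i <= l0 -> ~~ Rch (p0 i).
  elim=> [|i IH] Hi; first by rewrite p00.
  have Hi' : i <= l0 by apply: ltnW.
  have Hi'' : i < l0 by [].
  apply: contra (IH Hi') => H; apply: Rch_back H; exact: p0e.
exists z, l0.+1, (fun j => if j is j'.+1 then p0 j' else z); split => //.
- move=> [|i] Hi /=; first by rewrite p00.
  by apply: p0e.
- by move=> [|j] // Hj; apply: p0R.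
- move=> [|i] [|j] // Hi Hj /=.
  + move=> E'; have := p0R j Hj; by rewrite -E' Rz.
  + move=> E'; have := p0R i Hi; by rewrite E' Rz.
  + by move=> E'; congr S; apply: p0i E'.
Qed.


Lemma ear_step : exists2 X' : {set V}, X \subset X' & (n \in X' /\ good X').
Proof.
case: get_h => z [lq [h [[h0 hl] Rz ha hR hi]]].
case/existsP: (Rz) => x' /andP [x'X zx'].
case: (cpathF zx') => lt [g [g0 gl ge gi]].
move: x'X; rewrite !inE => /andP [x'k x'X].
have gR : forall i, i <= lt -> Rch (g i).
  move=> i Hi; apply/existsP; exists x'; rewrite !inE x'k x'X /= -gl.
  have := @route _ e1 (fun s => g (i + s)) (lt - i); rewrite addn0 subnKC //; apply.
  move=> s Hs; rewrite addnS; apply: ge; by rewrite -ltn_subRL.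
have gk : forall i, i <= lt -> g i != k by move=> i Hi; apply: Rch_nk; apply: gR.
have hk : forall j, j <= lq -> h j != k.
  move=> [|j] Hj; first by rewrite h0; apply: Rch_nk.
  by have := ha j Hj; case/and3P => _; rewrite inE.
have hnR : forall j, 0 < j <= lq -> h j \notin X.
  move=> j Hj; apply: contra (hR _ Hj) => H; apply: RchX => //; apply: hk; by case/andP: Hj.
have hg0 : h 0 = g 0 by rewrite h0 g0.
have ga : forall i, i < lt -> arc (g i) (g i.+1) by move=> i Hi; case/and3P: (ge i Hi).
have hA : forall i, i < lq -> arc (h i) (h i.+1) by move=> i Hi; case/and3P: (ha i Hi).
have hlk : arc (h lq) k by rewrite hl.
pose m := lt + lq + 1.
pose f := glue g h k lt lq.
have fadj : forall i, i < m -> arc (f i) (f i.+1) || arc (f i.+1) (f i) := glue_adj hg0 ga hA hlk.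
have gh : forall i j, i <= lt -> 0 < j <= lq -> g i <> h j.
  move=> i j Hi Hj E; have := hR _ Hj; by rewrite -E gR.
have gk' : forall i, i <= lt -> g i <> k by move=> i Hi; apply/eqP; apply: gk.
have hk' : forall j, j <= lq -> h j <> k by move=> j Hj; apply/eqP; apply: hk.
have finj : forall i j, i <= m -> j <= m -> f i = f j -> i = j := glue_inj hg0 gi hi gh gk' hk'.
have f0 : f 0 = x' by rewrite /f glue_g // subn0.
have fm : f m = k by rewrite /f /m glue_m.
pose X' := X :|: img f m.
have XX' : X \subset X' by apply: subsetUl.
have inX' : forall i, i <= m -> f i \in X' by move=> i Hi; rewrite inE img_in ?orbT.
have gX' : forall j, j <= lt -> g j \in X'.
  move=> j Hj; have := inX' (lt - j); rewrite /f glue_g ?leq_subr // subKn //; apply.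
  by apply: leq_trans (leq_subr j lt) _; rewrite /m -addnA leq_addr.
have hX' : forall j, j <= lq -> h j \in X'.
  move=> j Hj; have := inX' (lt + j); rewrite /f glue_h //; apply.
  by rewrite /m -addnA leq_add2l addn1 leqW.
case: (gX) => -[r rX Hr] cX bX.
have kr : connect (darc arc X') k r by apply: darc_mono XX' _ _ (Hr _ kX).
have gr : forall j, j <= lt -> connect (darc arc X') (g j) r.
  move=> j Hj; apply: connect_trans (darc_mono XX' (Hr _ x'X)).
  rewrite -gl; have := @route _ (darc arc X') (fun s => g (j + s)) (lt - j).
  rewrite addn0 subnKC //; apply => s Hs.
  have H1 : j + s < lt by rewrite -ltn_subRL.
  by rewrite /darc addnS !gX' ?ga // ltnW.
have hr : forall j, j <= lq -> connect (darc arc X') (h j) r.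
  move=> j Hj; apply: connect_trans kr.
  apply: connect_trans (connect1 (_ : darc arc X' (h lq) k)); last first.
    by rewrite /darc hX' // hlk (subsetP XX' _ kX).
  have := @route _ (darc arc X') (fun s => h (j + s)) (lq - j).
  rewrite addn0 subnKC //; apply => s Hs.
  have H1 : j + s < lq by rewrite -ltn_subRL.
  by rewrite /darc addnS !hX' ?hA // ltnW.
have f0X : f 0 \in X by rewrite f0.
have fmX : f m \in X by rewrite fm.
exists X' => //; split.
  by rewrite -hl -(glue_h k lt (leqnn lq) hg0) inX' // /m leq_addr.
split.
- exists r; first by rewrite (subsetP XX').
  move=> v; rewrite inE => /orP [vX|]; first exact: darc_mono XX' _ _ (Hr _ vX).
  rewrite inE => /existsP [[i Hi] /= /eqP ->]; rewrite ltnS in Hi.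
  case: (glue_cls Hi) => [Ci|[j Hj ->]|->].
  + rewrite /f glue_g //; apply: gr; exact: leq_subr.
  + case/andP: Hj => _ Hj; rewrite /f glue_h //; exact: hr.
  + by rewrite -/m fm.
- apply: (key (arc:=arc) (X:=X) (f:=f) (m:=m) (Y:=X') (w:=k)) => //.
  by rewrite (setIidPl XX').
- move=> w wX'; apply: (key (arc:=arc) (X:=X) (f:=f) (m:=m) (Y:=X' :\ w) (w:=w)) => //.
  + exact: subsetDl.
  + move=> v vX' vw; rewrite !inE vw /=.
    by move: vX'; rewrite !inE.
  have -> : X :&: (X' :\ w) = X :\ w.
    apply/setP => v; rewrite !inE; case: (boolP (v \in X)) => vX; last by rewrite !andbF.
    by rewrite /= andbT.
  case: (boolP (w \in X)) => wX; first exact: bX.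
  have -> : X :\ w = X by apply/setP => v; rewrite !inE; case: eqP => // ->; rewrite (negbTE wX).
  by [].
Qed.

End Ear.
End G2.


Section M.
Variable N : nat.
Local Notation V := 'I_N.
Variable arc : rel V.

Lemma dom_setst (psi : state N) k x : dom (setst psi k x) = k |: dom psi.
Proof. by apply/setP => j; rewrite !inE /setst /single ffunE; case: (j == k).  Qed.

Lemma dom_single (i : V) x : dom (single i x) = [set i].
Proof. by apply/setP => j; rewrite !inE /setst /single ffunE; case: (j == i).  Qed.

Lemma setU1_in (k : V) (A : {set V}) : k \in A -> k |: A = A.
Proof. by move=> kA; apply/setP => j; rewrite !inE; case: eqP => // ->. Qed.

Lemma good1 (i : V) : good arc [set i].
Proof.
apply: good_small; last by rewrite cards1.
exists i; first by rewrite inE.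
by move=> u; rewrite inE => /eqP ->; apply: connect0.
Qed.

Lemma good2 (k n : V) : arc n k -> good arc (n |: [set k]).
Proof.
move=> ank; apply: good_small; last by rewrite cardsU1 cards1; case: (n \notin _).
exists k; first by rewrite !inE eqxx orbT.
move=> v; rewrite !inE => /orP [/eqP ->|/eqP ->]; last exact: connect0.
by apply: connect1; rewrite /darc !inE !eqxx orbT ank.
Qed.

Lemma inv psi : inME arc psi -> exists2 X : {set V}, dom psi \subset X & good arc X.
Proof.
elim=> [i|i|{}psi psi' _ [X dX gX] _ ind].
- by exists [set i]; [rewrite dom_single | exact: good1].
- by exists [set i]; [rewrite dom_single | exact: good1].
case: ind.
- by exists X.
- move=> k n kD _ _ _ _; exists X => //; by rewrite dom_setst setU1_in.
- move=> k n kD nD ank fE0; rewrite !dom_setst (setU1_in kD).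
  case: (boolP (dom psi :\ k == set0)) => [/eqP E0|Ne].
    exists (n |: [set k]); last exact: good2.
    apply: setUS; apply/subsetP => v vD; rewrite inE; apply/negPn/negP => vk.
    have : v \in dom psi :\ k by rewrite in_setD1 vk vD.
    by rewrite E0 inE.
  move: fE0; rewrite /fE (negbTE Ne) /= => /negbT; rewrite -setI_eq0 => /set0Pn [u].
  rewrite !inE => /and3P [/andP [uk /existsP [v /andP [vn /andP [_ cun]]]] _ /existsP [w' /andP [w'D /andP [_ cuw]]]].
  rewrite inE in vn; move/eqP: vn => vn; subst v.
  move: w'D; rewrite in_setD1 => /andP [w'k w'D].
  have w'X : w' \in X by apply: (subsetP dX).
  have kX : k \in X by apply: (subsetP dX).
  case: (boolP (n \in X)) => nX.
    by exists X => //; apply/subsetP => v; rewrite in_setU1 => /orP [/eqP ->|/(subsetP dX)].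
  case: (ear_step gX kX ank w'X w'k cun cuw) => X' XX' [nX' gX'].
  exists X' => //; apply/subsetP => v; rewrite in_setU1 => /orP [/eqP -> //|vD].
  by apply: (subsetP XX'); apply: (subsetP dX).
- move=> k n kD _ _ _; exists X => //; by rewrite dom_setst setU1_in.
- move=> k n _ _ ank _; exists (n |: [set k]); last exact: good2.
  by rewrite dom_setst dom_single.
- move=> k n _ _ _ _; exists [set k]; last exact: good1.
  by rewrite dom_single.
Qed.

Lemma final psi : inME arc psi -> 2 < #|dom psi| ->
  exists2 X : {set V}, dom psi \subset X & directed_subblock arc X.
Proof.
move=> H Hc; case: (inv H) => X dX [rX cX bX]; exists X => //; split => //.
split => //; apply: leq_trans Hc _; exact: subset_leq_card.
Qed.

End M.

Unset Implicit Arguments. Set Strict Implicit. Set Printing Implicit Defensive.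
Import Order.TTheory GRing.Theory Num.Theory.
Local Open Scope ring_scope.

Theorem mainTheorem8 (R : numDomainType) (N : nat) (T : 'I_N -> 'I_N -> R)
  (HT0 : forall i j, 0 <= T i j) (HTd : forall i, T i i = 0)
  (psi : state N) :
  inME [rel j i | 0 < T i j] psi -> noR psi -> (2 < #|dom psi|)%N ->
  exists2 X : {set 'I_N}, dom psi \subset X & directed_subblock [rel j i | 0 < T i j] X.
Proof.
move=> H _ Hc; exact: (final H Hc).
Qed.
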